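(* Consider the single-node stochastic clearing problem described in the context, with positive incremental bid prices. Let $(d_j^*,g_i^*,D_j^*(\cdot),G_i^*(\cdot))$ be an optimal solution with associated prices $(\pi^*,\Pi^*(\cdot))$. Then the expected uplift payments are zero: $\mathcal{M}_i^U=0$ for all $i\in\mathcal{G}$ and $\mathcal{M}_j^U=0$ for all $j\in\mathcal{D}$.
   Context: Finite nonempty sets of suppliers $\mathcal{G}$ and consumers $\mathcal{D}$; a finite scenario set $\Omega$ with probabilities $p(\omega)>0$, $\sum_\omega p(\omega)=1$, $\mathbb{E}[Y(\omega)]=\sum_\omega p(\omega)Y(\omega)$. Data: bid prices $\alpha_i^g,\alpha_j^d\ge 0$, incremental bid prices $\Delta\alpha_i^{g,\pm},\Delta\alpha_j^{d,\pm}$, real-time capacities $\bar G_i(\omega),\bar D_j(\omega)\ge 0$. $(x)_+=\max\{x,0\}$, $(x)_-=\max\{-x,0\}$. Cost functions: $C_i^g(\omega)=\alpha_i^gG_i(\omega)+\Delta\alpha_i^{g,+}(G_i(\omega)-g_i)_++\Delta\alpha_i^{g,-}(G_i(\omega)-g_i)_-$ and $C_j^d(\omega)=-\alpha_j^dD_j(\omega)+\Delta\alpha_j^{d,+}(D_j(\omega)-d_j)_-+\Delta\alpha_j^{d,-}(D_j(\omega)-d_j)_+$. The single-node problem: minimize $\sum_i\mathbb{E}[C_i^g(\omega)]+\sum_j\mathbb{E}[C_j^d(\omega)]$ over free $g_i,d_j\in\mathbb{R}$ and real-time $G_i(\omega),D_j(\omega)$ subject to $\sum_i g_i=\sum_j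 d_j$ (multiplier $\pi$), $\sum_i(G_i(\omega)-g_i)=\sum_j(D_j(\omega)-d_j)$ for each $\omega$ (multiplier $p(\omega)\Pi(\omega)$), $0\le G_i(\omega)\le\bar G_i(\omega)$, $0\le D_j(\omega)\le\bar D_j(\omega)$. ''Optimal solution with associated prices $(\pi^*,\Pi^* )$'' means the solution minimizes the partial Lagrange function $\text{objective}-\pi^*(\sum_ig_i-\sum_jd_j)-\mathbb{E}[\Pi^*(\omega)(\sum_i(G_i(\omega)-g_i)-\sum_j(D_j(\omega)-d_j))]$ over all free $g_i,d_j$ and all $G_i(\cdot),D_j(\cdot)$ satisfying the bound constraints. Payments (evaluated at the solution and prices): $P_i^g(\omega)=g_i\pi+(G_i(\omega)-g_i)\Pi(\omega)$, $P_j^d(\omega)=-d_j\pi-(D_j(\omega)-d_j)\Pi(\omega)$. Expected uplifts: $\mathcal{M}_i^U:=-\min\{\mathbb{E}[P_i^g(\omega)]-\mathbb{E}[C_i^g(\omega)],0\}$ and $\mathcal{M}_j^U:=-\min\{\mathbb{E}[P_j^d(\omega)]-\mathbb{E}[C_j^d(\omega)],0\}$. *)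

(* Defs.v *)
From HB Require Import structures.
From mathcomp Require Import all_boot all_order all_algebra.
Set Implicit Arguments. Unset Strict Implicit. Unset Printing Implicit Defensive.
Import Order.TTheory GRing.Theory Num.Theory.
Local Open Scope ring_scope.

Section Market.
Variable R : realFieldType.

Definition posp (x : R) : R := Num.max x 0.
Definition negp (x : R) : R := Num.max (- x) 0.

Definition expect (Om : finType) (p : Om -> R) (Y : Om -> R) : R :=
  \sum_(w : Om) p w * Y w.

Record market (Gs Ds Om : finType) := Market {
  prob : Om -> R;
  alpha_g : Gs -> R;
  alpha_d : Ds -> R;
  dalpha_gp : Gs -> R;
  dalpha_gm : Gs -> R;
  dalpha_dp : Ds -> R;
  dalpha_dm : Ds -> R;
  Gbar : Gs -> Om -> R;
  Dbar : Ds -> Om -> R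
}.

Variables (Gs Ds Om : finType) (M : market Gs Ds Om).

Definition cost_g (i : Gs) (gi : R) (Gi : Om -> R) (w : Om) : R :=
  alpha_g M i * Gi w + dalpha_gp M i * posp (Gi w - gi)
  + dalpha_gm M i * negp (Gi w - gi).

Definition cost_d (j : Ds) (dj : R) (Dj : Om -> R) (w : Om) : R :=
  - (alpha_d M j * Dj w) + dalpha_dp M j * negp (Dj w - dj)
  + dalpha_dm M j * posp (Dj w - dj).

Definition objective (g : Gs -> R) (d : Ds -> R)
    (G : Gs -> Om -> R) (D : Ds -> Om -> R) : R :=
  \sum_(i : Gs) expect (prob M) (cost_g i (g i) (G i))
  + \sum_(j : Ds) expect (prob M) (cost_d j (d j) (D j)).

Definition bounds_ok (G : Gs -> Om -> R) (D : Ds -> Om -> R) : Prop :=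
  (forall i w, 0 <= G i w <= Gbar M i w) /\
  (forall j w, 0 <= D j w <= Dbar M j w).

Definition feasible (g : Gs -> R) (d : Ds -> R)
    (G : Gs -> Om -> R) (D : Ds -> Om -> R) : Prop :=
  \sum_(i : Gs) g i = \sum_(j : Ds) d j /\
  (forall w, \sum_(i : Gs) (G i w - g i) = \sum_(j : Ds) (D j w - d j)) /\
  bounds_ok G D.

Definition lagrangian (pi : R) (Pi : Om -> R) (g : Gs -> R) (d : Ds -> R)
    (G : Gs -> Om -> R) (D : Ds -> Om -> R) : R :=
  objective g d G D
  - pi * (\sum_(i : Gs) g i - \sum_(j : Ds) d j)
  - expect (prob M) (fun w => Pi w *
      (\sum_(i : Gs) (G i w - g i) - \sum_(j : Ds) (D j w - d j))).

(* optimal solution (feasible, minimizes the objective over feasible points)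
   with associated prices (pi, Pi): it minimizes the partial Lagrangian over
   all free g, d and all G, D satisfying the bound constraints. *)
Definition optimal_with_prices (g : Gs -> R) (d : Ds -> R)
    (G : Gs -> Om -> R) (D : Ds -> Om -> R) (pi : R) (Pi : Om -> R) : Prop :=
  feasible g d G D /\
  (forall g' d' G' D', feasible g' d' G' D' ->
      objective g d G D <= objective g' d' G' D') /\
  (forall g' d' G' D', bounds_ok G' D' ->
      lagrangian pi Pi g d G D <= lagrangian pi Pi g' d' G' D').

Definition pay_g (pi : R) (Pi : Om -> R) (gi : R) (Gi : Om -> R) (w : Om) : R :=
  gi * pi + (Gi w - gi) * Pi w.
Definition pay_d (pi : R) (Pi : Om -> R) (dj : R) (Dj : Om -> R) (w : Om) : R :=
  - (dj * pi) - (Dj w - dj) * Pi w.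

Definition uplift_g (pi : R) (Pi : Om -> R) (i : Gs) (gi : R) (Gi : Om -> R) : R :=
  - Num.min (expect (prob M) (pay_g pi Pi gi Gi)
             - expect (prob M) (cost_g i gi Gi)) 0.
Definition uplift_d (pi : R) (Pi : Om -> R) (j : Ds) (dj : R) (Dj : Om -> R) : R :=
  - Num.min (expect (prob M) (pay_d pi Pi dj Dj)
             - expect (prob M) (cost_d j dj Dj)) 0.

End Market.

(* Main.v *)
Require Import Defs.
From mathcomp Require Import all_boot all_order all_algebra.
From mathcomp Require Import ring lra.
Import Order.TTheory GRing.Theory Num.Theory.
Local Open Scope ring_scope.

Section Aux.
Variables (R : realFieldType) (Gs Ds Om : finType) (M : market R Gs Ds Om).

Lemma expectD (f h : Om -> R) :
  expect (prob M) (fun w => f w + h w) = expect (prob M) f + expect (prob M) h.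
Proof. by rewrite /expect -big_split; apply: eq_bigr => w _; rewrite mulrDr. Qed.

Lemma lag_decomp pi Pi g d G D :
  \sum_(w : Om) prob M w = 1 ->
  lagrangian M pi Pi g d G D =
  \sum_(i : Gs) (expect (prob M) (cost_g M i (g i) (G i))
                 - expect (prob M) (pay_g pi Pi (g i) (G i)))
  + \sum_(j : Ds) (expect (prob M) (cost_d M j (d j) (D j))
                 - expect (prob M) (pay_d pi Pi (d j) (D j))).
Proof.
move=> hp1.
rewrite /lagrangian /objective !sumrB.
have Eg : \sum_(i : Gs) expect (prob M) (pay_g pi Pi (g i) (G i)) =
   pi * \sum_i g i + \sum_(w : Om) prob M w * Pi w * \sum_i (G i w - g i).
  rewrite /expect /pay_g.
  transitivity (\sum_(i : Gs) \sum_(w : Om) (g i * pi * prob M w +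
        prob M w * Pi w * (G i w - g i))).
    by apply: eq_bigr => i _; apply: eq_bigr => w _; ring.
  under eq_bigr => i _ do rewrite big_split /=.
  rewrite big_split /= [X in _ + X = _]exchange_big /=.
  congr (_ + _); last by apply: eq_bigr => w _; rewrite mulr_sumr.
  rewrite mulr_sumr; apply: eq_bigr => i _.
  by rewrite -mulr_sumr hp1 mulr1 mulrC.
have Ed : \sum_(j : Ds) expect (prob M) (pay_d pi Pi (d j) (D j)) =
   - (pi * \sum_j d j) - \sum_(w : Om) prob M w * Pi w * \sum_j (D j w - d j).
  rewrite /expect /pay_d.
  transitivity (\sum_(j : Ds) \sum_(w : Om) (- (d j * pi * prob M w) +
        - (prob M w * Pi w * (D j w - d j)))).
    by apply: eq_bigr => i _; apply: eq_bigr => w _; ring.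
  under eq_bigr => i _ do rewrite big_split /=.
  rewrite big_split /= [X in _ + X = _]exchange_big /=.
  congr (_ + _); last by rewrite -sumrN; apply: eq_bigr => w _; rewrite mulr_sumr sumrN.
  rewrite mulr_sumr -sumrN; apply: eq_bigr => i _.
  by rewrite sumrN -mulr_sumr hp1 mulr1 mulrC.
rewrite Eg Ed /expect.
have -> : \sum_(w : Om) prob M w * (Pi w * (\sum_i (G i w - g i) - \sum_j (D j w - d j)))
   = \sum_(w : Om) prob M w * Pi w * \sum_i (G i w - g i)
     - \sum_(w : Om) prob M w * Pi w * \sum_j (D j w - d j).
  by rewrite -sumrB; apply: eq_bigr => w _; ring.
ring.
Qed.

End Aux.

Theorem theorem5 (R : realFieldType) (Gs Ds Om : finType)
  (M : market R Gs Ds Om)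
  (hGs : (0 < #|Gs|)%N) (hDs : (0 < #|Ds|)%N) (hOm : (0 < #|Om|)%N)
  (hp : forall w, 0 < prob M w) (hp1 : \sum_(w : Om) prob M w = 1)
  (hag : forall i, 0 <= alpha_g M i) (had : forall j, 0 <= alpha_d M j)
  (hgp : forall i, 0 < dalpha_gp M i) (hgm : forall i, 0 < dalpha_gm M i)
  (hdp : forall j, 0 < dalpha_dp M j) (hdm : forall j, 0 < dalpha_dm M j)
  (hGbar : forall i w, 0 <= Gbar M i w) (hDbar : forall j w, 0 <= Dbar M j w)
  (g : Gs -> R) (d : Ds -> R) (G : Gs -> Om -> R) (D : Ds -> Om -> R)
  (pi : R) (Pi : Om -> R) :
  optimal_with_prices M g d G D pi Pi ->
  (forall i, uplift_g M pi Pi i (g i) (G i) = 0) /\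
  (forall j, uplift_d M pi Pi j (d j) (D j) = 0).
Proof.
move=> [[_ [_ [hGb hDb]]] [_ hL]].
have p0 : posp 0 = 0 :> R by rewrite /posp maxxx.
have n0 : negp 0 = 0 :> R by rewrite /negp oppr0 maxxx.
have E0 : forall Y : Om -> R, (forall w, Y w = 0) -> expect (prob M) Y = 0.
  by move=> Y HY; rewrite /expect big1 // => w _; rewrite HY mulr0.
split.
- move=> i.
  pose g' := fun k => if k == i then 0 else g k.
  pose G' := fun k w => if k == i then 0 else G k w.
  have hb : bounds_ok M G' D.
    split=> // k w; rewrite /G'; case: eqP => _ //; by rewrite lexx hGbar.
  pose F := fun k => expect (prob M) (cost_g M k (g k) (G k))
                 - expect (prob M) (pay_g pi Pi (g k) (G k)).
  have HF : \sum_k (expect (prob M) (cost_g M k (g' k) (G' k))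
                 - expect (prob M) (pay_g pi Pi (g' k) (G' k))) = \sum_k F k - F i.
    rewrite [in RHS](bigD1 i) //= (bigD1 i) //= /g' /G' eqxx.
    rewrite (E0 (cost_g M i 0 (fun _ => 0))); last first.
      by move=> w; rewrite /cost_g subrr p0 n0 !mulr0 !addr0.
    rewrite (E0 (pay_g pi Pi 0 (fun _ => 0))); last first.
      by move=> w; rewrite /pay_g subrr !mul0r addr0.
    rewrite subrr add0r addrAC subrr add0r.
    idtac.
    by apply: eq_bigr => k /negbTE ->.
  have := hL g' d G' D hb.
  rewrite !lag_decomp // HF -/F.
  set X := \sum_j _.
  rewrite /uplift_g -/(F i) => h.
  have hFi : F i <= 0 by move: h; rewrite lerD2r; lra.
  have : 0 <= - F i by rewrite oppr_ge0.
  rewrite /F opprB => /min_r ->.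
  by rewrite oppr0.
- move=> j.
  pose d' := fun k => if k == j then 0 else d k.
  pose D' := fun k w => if k == j then 0 else D k w.
  have hb : bounds_ok M G D'.
    split=> // k w; rewrite /D'; case: eqP => _ //; by rewrite lexx hDbar.
  pose F := fun k => expect (prob M) (cost_d M k (d k) (D k))
                 - expect (prob M) (pay_d pi Pi (d k) (D k)).
  have HF : \sum_k (expect (prob M) (cost_d M k (d' k) (D' k))
                 - expect (prob M) (pay_d pi Pi (d' k) (D' k))) = \sum_k F k - F j.
    rewrite [in RHS](bigD1 j) //= (bigD1 j) //= /d' /D' eqxx.
    rewrite (E0 (cost_d M j 0 (fun _ => 0))); last first.
      by move=> w; rewrite /cost_d subrr p0 n0 !mulr0 oppr0 !addr0.
    rewrite (E0 (pay_d pi Pi 0 (fun _ => 0))); last first.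
      by move=> w; rewrite /pay_d /=; ring.
    rewrite subrr add0r addrAC subrr add0r.
    by apply: eq_bigr => k /negbTE ->.
  have := hL g d' G D' hb.
  rewrite !lag_decomp // HF -/F.
  rewrite /uplift_d -/(F j) => h.
  have hFj : F j <= 0 by move: h; rewrite lerD2l; lra.
  have : 0 <= - F j by rewrite oppr_ge0.
  rewrite /F opprB => /min_r ->.
  by rewrite oppr0.
Qed.
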